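(* Let $\xi,\eta\in\mathrm{SL}(2,\mathbb{R})$ with $\gamma:=\xi\eta\xi^{-1}\eta^{-1}$ elliptic, let $p\in\mathbf{H}^2$ be the fixed point of $\gamma$, and set $p_4=p$, $p_3=\eta^{-1}p$, $p_2=\xi^{-1}\eta^{-1}p$, $p_1=\eta\xi^{-1}\eta^{-1}p$. Then the four points $p_1,p_2,p_3,p_4$ do not all lie on a single geodesic of $\mathbf{H}^2$.
   Context: $\mathrm{SL}(2,\mathbb{R})$ acts on the hyperbolic plane $\mathbf{H}^2$ by isometries via Möbius transformations; an element is elliptic if it fixes exactly one point of $\mathbf{H}^2$ (equivalently $|\mathrm{tr}|<2$). *)

(* Defs.v *)
From HB Require Import structures.
From mathcomp Require Import all_boot all_order all_algebra.
From mathcomp Require Import reals.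
Set Implicit Arguments. Unset Strict Implicit. Unset Printing Implicit Defensive.
Import Order.TTheory GRing.Theory Num.Theory.
Local Open Scope ring_scope.

Section Hyp.
Variable R : realType.

(* Points of the upper half-plane model of H^2: z = (x, y) stands for x + i y, with y > 0. *)
Definition H2 (z : R * R) : Prop := 0 < z.2.

(* Moebius action of g = [[a, b], [c, d]] : z |-> (a z + b) / (c z + d),
   written out in real coordinates. *)
Definition mob (g : 'M[R]_2) (z : R * R) : R * R :=
  let a := g 0 0 in let b := g 0 1 in let c := g 1 0 in let d := g 1 1 in
  let x := z.1 in let y := z.2 in
  let D := (c * x + d) ^+ 2 + (c * y) ^+ 2 in
  (((a * x + b) * (c * x + d) + a * c * y ^+ 2) / D, (a * d - b * c) * y / D).

Definition SL2 (g : 'M[R]_2) : Prop := \det g = 1.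

Definition elliptic (g : 'M[R]_2) : Prop :=
  exists p, [/\ H2 p, mob g p = p & forall q, H2 q -> mob g q = q -> q = p].

(* Geodesics of H^2 (as point sets): vertical half-lines and
   half-circles orthogonal to the real axis. *)
Definition is_geodesic (G : R * R -> Prop) : Prop :=
  (exists x0 : R, forall z, G z <-> (H2 z /\ z.1 = x0)) \/
  (exists (c r : R), 0 < r /\
     forall z, G z <-> (H2 z /\ (z.1 - c) ^+ 2 + z.2 ^+ 2 = r ^+ 2)).

End Hyp.

(* Main.v *)
Require Import Defs.
From HB Require Import structures.
From mathcomp Require Import all_boot all_order all_algebra.
From mathcomp Require Import reals.
From mathcomp Require Import ring lra.
Import Order.TTheory GRing.Theory Num.Theory.
Local Open Scope ring_scope.
Set Implicit Arguments. Unset Strict Implicit.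
Section S.
Variable R : realType.
Implicit Types (A B : 'M[R]_2) (z : R * R) (a b c d e f g h y t u : R).
Lemma det2 (M : 'M[R]_2) : \det M = M 0 0 * M 1 1 - M 0 1 * M 1 0.
Proof.
rewrite (expand_det_row _ 0) !big_ord_recl big_ord0 /cofactor !det_mx11 !mxE /=.
try have -> : lift (0:'I_2) (0:'I_1) = 1 by apply/val_inj.
try have -> : lift (ord0:'I_2) (0:'I_1) = 1 by apply/val_inj.
try have -> : lift (lift (ord0:'I_2) (ord0 : 'I_1)) (0:'I_1) = 0 by apply/val_inj.
try have -> : lift (ord0:'I_2) (ord0 : 'I_1) = 1 by apply/val_inj.
try have -> : (ord0 : 'I_2) = 0 by apply/val_inj.
try have -> : lift (1:'I_2) (0:'I_1) = 0 by apply/val_inj.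
rewrite /bump /= expr0 expr1 addr0 mul1r; ring.
Qed.
Lemma mul2 (A B : 'M[R]_2) i j : (A *m B) i j = A i 0 * B 0 j + A i 1 * B 1 j.
Proof.
rewrite mxE !big_ord_recl big_ord0 addr0.
have e0 : (ord0 : 'I_2) = 0 by apply/val_inj.
have e1 : lift (ord0 : 'I_2) (ord0 : 'I_1) = 1 by apply/val_inj.
by rewrite e0 e1.
Qed.

Definition Dn (g : 'M[R]_2) z := (g 1 0 * z.1 + g 1 1)^+2 + (g 1 0 * z.2)^+2.

Lemma Dn_gt0 (g : 'M[R]_2) z : \det g != 0 -> z.2 != 0 -> 0 < Dn g z.
Proof.
rewrite det2 /Dn => dg y0.
rewrite lt_def addr_ge0 ?sqr_ge0 // andbT.
apply/negP; rewrite paddr_eq0 ?sqr_ge0 // !sqrf_eq0 => /andP[/eqP h1 /eqP h2].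
move: h2 => /eqP; rewrite mulf_eq0 (negbTE y0) orbF => /eqP c0.
move: h1; rewrite c0 mul0r add0r => d0.
by move: dg; rewrite c0 d0 !mulr0 subrr eqxx.
Qed.

Lemma mob_alt (g : 'M[R]_2) z : mob g z = (((g 0 0 * z.1 + g 0 1) * (g 1 0 * z.1 + g 1 1) + g 0 0 * g 1 0 * z.2 ^+ 2) / Dn g z, \det g * z.2 / Dn g z).
Proof. by rewrite /mob det2. Qed.

Lemma mobM A B z : \det A != 0 -> \det B != 0 -> z.2 != 0 ->
  mob (A *m B) z = mob A (mob B z).
Proof.
move=> dA dB y0.
have DB := Dn_gt0 dB y0.
have dAB : \det (A *m B) != 0 by rewrite det_mulmx mulf_neq0.
have DAB := Dn_gt0 dAB y0.
have y1 : (mob B z).2 != 0 by rewrite mob_alt /= mulf_neq0 // ?invr_eq0 ?mulf_neq0 // gt_eqF.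
have KD : Dn A (mob B z) = Dn (A *m B) z / Dn B z.
  move: DB DAB; rewrite /Dn /mob !mul2 /= => DB DAB.
  field. by rewrite gt_eqF.
rewrite [in RHS]mob_alt KD.
move: DB DAB; rewrite /Dn /mob !det2 !mul2 /= => DB DAB.
congr pair; field; rewrite ?gt_eqF //.
Qed.
Lemma mulz x y : y != 0 -> x * y = 0 -> x = 0.
Proof. by move=> y0 /eqP; rewrite mulf_eq0 (negbTE y0) orbF => /eqP. Qed.

Lemma pneq (x : R) : 0 < x -> x != 0.
Proof. by move=> h; rewrite gt_eqF. Qed.

Lemma subz x y : x - y = 0 -> x = y.
Proof. by move/eqP; rewrite subr_eq0 => /eqP. Qed.

Definition ax a b c d y t :=
  b*d + a*c*y^+2 = 0 /\ (a*d-b*c)*y - t*(d^+2+c^+2*y^+2) = 0.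

Lemma ax_Dpos a b c d y t : 0 < y -> 0 < t -> 0 < a*d-b*c -> ax a b c d y t ->
  0 < d^+2+c^+2*y^+2.
Proof.
move=> y0 t0 dp [_ /subz h].
have : 0 < t * (d^+2+c^+2*y^+2) by rewrite -h mulr_gt0.
by rewrite pmulr_rgt0.
Qed.

Lemma ax_fun a b c d y t u : 0 < y -> 0 < t -> 0 < a*d-b*c ->
  ax a b c d y t -> ax a b c d y u -> u = t.
Proof.
move=> y0 t0 dp A1 A2; have D := ax_Dpos y0 t0 dp A1.
case: A1 A2 => _ /subz h1 [_ /subz h2].
apply: subz; apply: (mulz (pneq D)); apply/eqP; rewrite mulrBl subr_eq0 -h1 -h2 //.
Qed.

Lemma fixS a b c d y : 0 < y -> 0 < a*d-b*c -> ax a b c d y y ->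
  a = d /\ b = -(c*y^+2).
Proof.
move=> y0 dp A; have D := ax_Dpos y0 y0 dp A; case: A => h1 h2.
have v : a*d - b*c - (d^+2+c^+2*y^+2) = 0.
  apply: (mulz (pneq y0)); by rewrite -h2; ring.
have E : (a-d)*(d^+2+c^+2*y^+2) = d*(a*d - b*c - (d^+2+c^+2*y^+2)) + c*(b*d + a*c*y^+2) by ring.
rewrite h1 v !mulr0 addr0 in E.
have ad : a = d by apply: subz; exact: (mulz (pneq D)).
split => //; subst a.
have E2 : (b + c*y^+2) * (d^+2+c^+2*y^+2) = d*(b*d + d*c*y^+2) - c*y^+2*(d*d - b*c - (d^+2+c^+2*y^+2)) by ring.
rewrite h1 v !mulr0 subr0 in E2.
apply: subz; rewrite opprK; exact: (mulz (pneq D)).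
Qed.

Lemma sq_ne y t : 0 < y -> 0 < t -> y != t -> y^+2 - t^+2 != 0.
Proof.
move=> y0 t0 ne; rewrite subr_sqr mulf_neq0 //; first by rewrite subr_eq0.
by rewrite gt_eqF // addr_gt0.
Qed.

Lemma two a b c d y t : 0 < y -> 0 < t -> y != t ->
  b*d + a*c*y^+2 = 0 -> b*d + a*c*t^+2 = 0 -> a*c = 0 /\ b*d = 0.
Proof.
move=> y0 t0 ne h1 h2.
have E : a*c*(y^+2 - t^+2) = (b*d + a*c*y^+2) - (b*d + a*c*t^+2) by ring.
rewrite h1 h2 subrr in E.
have ac := mulz (sq_ne y0 t0 ne) E; split => //.
by move: h1; rewrite ac mul0r addr0.
Qed.

Lemma fix2 a b c d y t : 0 < y -> 0 < t -> y != t -> 0 < a*d-b*c ->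
  ax a b c d y y -> ax a b c d t t -> [/\ a = d, b = 0 & c = 0].
Proof.
move=> y0 t0 ne dp A1 A2.
have [ad hb] := fixS y0 dp A1; have [_ hb2] := fixS t0 dp A2.
have E : c * (y^+2 - t^+2) = 0.
  have H : -(c*y^+2) = -(c*t^+2) by rewrite -hb -hb2.
  by rewrite mulrBr (oppr_inj H) subrr.
have c0 := mulz (sq_ne y0 t0 ne) E.
by split => //; rewrite hb c0 mul0r oppr0.
Qed.

Lemma shape a b c d : a*c = 0 -> b*d = 0 -> 0 < a*d-b*c ->
  (b = 0 /\ c = 0) \/ (a = 0 /\ d = 0).
Proof.
move=> ac bd dp.
have [a0|a0] := eqVneq a 0.
  right; split => //; move: dp; rewrite a0 mul0r sub0r => dp.
  have b0 : b != 0 by apply: contraTneq dp => ->; rewrite mul0r oppr0 ltxx.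
  by apply: (mulz b0); rewrite mulrC.
have c0 : c = 0 by apply: (mulz a0); rewrite mulrC.
left; split => //; move: dp; rewrite c0 mulr0 subr0 => dp.
have d0 : d != 0 by apply: contraTneq dp => ->; rewrite mulr0 ltxx.
exact: (mulz d0).
Qed.

Definition comm8 a b c d e f g h :=
 [/\ a*e+b*g = e*a+f*c, a*f+b*h = e*b+f*d, c*e+d*g = g*a+h*c & c*f+d*h = g*b+h*d].
Definition acomm8 a b c d e f g h :=
 [/\ a*e+b*g = -(e*a+f*c), a*f+b*h = -(e*b+f*d), c*e+d*g = -(g*a+h*c) & c*f+d*h = -(g*b+h*d)].

Lemma csym a b c d e f g h : comm8 a b c d e f g h \/ acomm8 a b c d e f g h ->
  comm8 e f g h a b c d \/ acomm8 e f g h a b c d.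
Proof.
case=> [[h1 h2 h3 h4]|[h1 h2 h3 h4]]; [left|right]; split.
- by rewrite -h1.
- by rewrite -h2.
- by rewrite -h3.
- by rewrite -h4.
- by rewrite h1 opprK.
- by rewrite h2 opprK.
- by rewrite h3 opprK.
- by rewrite h4 opprK.
Qed.

Lemma oneFix a b c d e f g h y t1 t2 : 0 < y -> 0 < t1 -> 0 < t2 ->
  0 < a*d-b*c -> 0 < e*h-f*g -> y != t1 ->
  ax e f g h y y -> ax a b c d y t1 -> ax a b c d y t2 -> ax e f g h t1 t2 ->
  comm8 a b c d e f g h \/ acomm8 a b c d e f g h.
Proof.
move=> y0 t10 t20 dM dN ne A3 A1 A2 A4.
have t21 : t2 = t1 := ax_fun y0 t10 dM A1 A2.
subst t2.
have [eh f0 g0] := fix2 y0 t10 ne dN A3 A4.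
subst e f g; left; split; ring.
Qed.

Lemma bothFix a b c d e f g h y : 0 < y ->
  0 < a*d-b*c -> 0 < e*h-f*g -> ax e f g h y y -> ax a b c d y y ->
  comm8 a b c d e f g h \/ acomm8 a b c d e f g h.
Proof.
move=> y0 dM dN A3 A1.
have [ad hb] := fixS y0 dM A1; have [eh hf] := fixS y0 dN A3.
subst a b e f; left; split; ring.
Qed.

Lemma axd a d y t : 0 < a*d - 0*0 -> ax a 0 0 d y t -> a*y - t*d = 0.
Proof.
move=> dM [_ h]; have d0 : d != 0 by apply: contraTneq dM => ->; rewrite mulr0 mul0r subr0 ltxx.
apply: (mulz d0); rewrite -h; ring.
Qed.

Lemma axa b c y t : 0 < y -> 0 < 0*0 - b*c -> ax 0 b c 0 y t -> b + t*c*y = 0.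
Proof.
move=> y0 dM [_ h]; have c0 : c != 0 by apply: contraTneq dM => ->; rewrite !mulr0 subr0 ltxx.
have cy : -(c*y) != 0 by rewrite oppr_eq0 mulf_neq0 // pneq.
apply: (mulz cy); rewrite -h; ring.
Qed.

Lemma diagAnti a d f g y t1 t2 t3 : 0 < y -> 0 < t1 -> 0 < t2 -> 0 < t3 ->
  0 < a*d-0*0 -> 0 < 0*0-f*g ->
  ax 0 f g 0 y t3 -> ax a 0 0 d y t1 -> ax a 0 0 d t3 t2 -> ax 0 f g 0 t1 t2 ->
  comm8 a 0 0 d 0 f g 0 \/ acomm8 a 0 0 d 0 f g 0.
Proof.
move=> y0 t10 t20 t30 dM dN A3 A1 A2 A4.
have E1 := axd dM A1; have E2 := axd dM A2.
have E3 := axa y0 dN A3; have E4 := axa t10 dN A4.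
have g0 : g != 0 by apply: contraTneq dN => ->; rewrite !mulr0 subr0 ltxx.
have E5 : t3*y - t2*t1 = 0.
  apply: (mulz g0).
  have -> : (t3*y - t2*t1)*g = (f + t3*g*y) - (f + t2*g*t1) by ring.
  by rewrite E3 E4 subrr.
have E6 : (a - d)*((a + d)*(t3*y)) = 0.
  rewrite mulrA -subr_sqr.
  have -> : (a^+2 - d^+2)*(t3*y) = a*t3*(a*y - t1*d) + t1*d*(a*t3 - t2*d) + d^+2*(t2*t1 - t3*y) by ring.
  rewrite E1 E2 -opprB E5; ring.
have ty : t3 * y != 0 by rewrite mulf_neq0 // pneq.
move: E6 => /eqP; rewrite !mulf_eq0 (negbTE (pneq t30)) (negbTE (pneq y0)) !orbF => /orP[] /eqP h.
  by left; rewrite (subz h); split; ring.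
right; have ad : a = -d by apply: subz; rewrite opprK.
by rewrite ad; split; ring.
Qed.

Lemma antiAnti b c f g y t1 t2 t3 : 0 < y -> 0 < t1 -> 0 < t2 -> 0 < t3 ->
  0 < 0*0-b*c -> 0 < 0*0-f*g ->
  ax 0 f g 0 y t3 -> ax 0 b c 0 y t1 -> ax 0 b c 0 t3 t2 -> ax 0 f g 0 t1 t2 ->
  comm8 0 b c 0 0 f g 0 \/ acomm8 0 b c 0 0 f g 0.
Proof.
move=> y0 t10 t20 t30 dM dN A3 A1 A2 A4.
have E1 := axa y0 dM A1; have E2 := axa t30 dM A2.
have E3 := axa y0 dN A3; have E4 := axa t10 dN A4.
have g0 : g != 0 by apply: contraTneq dN => ->; rewrite !mulr0 subr0 ltxx.
have c0 : c != 0 by apply: contraTneq dM => ->; rewrite !mulr0 subr0 ltxx.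
have E5 : t3*y - t2*t1 = 0.
  apply: (mulz g0).
  have -> : (t3*y - t2*t1)*g = (f + t3*g*y) - (f + t2*g*t1) by ring.
  by rewrite E3 E4 subrr.
have E7 : t1*y - t2*t3 = 0.
  apply: (mulz c0).
  have -> : (t1*y - t2*t3)*c = (b + t1*c*y) - (b + t2*c*t3) by ring.
  by rewrite E1 E2 subrr.
have E8 : (t1 - t3) * ((t1 + t3) * y) = 0.
  have -> : (t1 - t3) * ((t1 + t3) * y) = t1*(t1*y - t2*t3) - t3*(t3*y - t2*t1) by ring.
  by rewrite E5 E7; ring.
have ty : (t1 + t3) * y != 0 by rewrite mulf_neq0 // pneq // addr_gt0.
have t13 := subz (mulz ty E8); subst t3.
have hb : b = -(t1*c*y) by apply: subz; rewrite opprK.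
have hf : f = -(t1*g*y) by apply: subz; rewrite opprK.
subst b f; left; split; ring.
Qed.

Lemma core8 a b c d e f g h y t1 t2 t3 : 0 < y -> 0 < t1 -> 0 < t2 -> 0 < t3 ->
  0 < a*d-b*c -> 0 < e*h-f*g ->
  ax e f g h y t3 -> ax a b c d y t1 -> ax a b c d t3 t2 -> ax e f g h t1 t2 ->
  comm8 a b c d e f g h \/ acomm8 a b c d e f g h.
Proof.
move=> y0 t10 t20 t30 dM dN A3 A1 A2 A4.
case: (eqVneq t3 y) => [e3|n3]; case: (eqVneq t1 y) => [e1|n1].
- by subst t3 t1; exact: bothFix y0 dM dN A3 A1.
- subst t3; apply: (oneFix y0 t10 t20 dM dN _ A3 A1 A2 A4); by rewrite eq_sym.
- subst t1; apply: csym; apply: (oneFix y0 t30 t20 dN dM _ A1 A3 A4 A2); by rewrite eq_sym.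
rewrite eq_sym in n3; rewrite eq_sym in n1.
have [ac bd] := two y0 t30 n3 A1.1 A2.1.
have [eg fh] := two y0 t10 n1 A3.1 A4.1.
case: (shape ac bd dM) => [[b0 c0]|[a0 d0]]; case: (shape eg fh dN) => [[f0 g0]|[e0 h0]]; subst.
- by left; split; ring.
- exact: diagAnti y0 t10 t20 t30 dM dN A3 A1 A2 A4.
- apply: csym; exact: diagAnti y0 t30 t20 t10 dN dM A1 A3 A4 A2.
- exact: antiAnti y0 t10 t20 t30 dM dN A3 A1 A2 A4.
Qed.

Lemma pos_det_neq (M : 'M[R]_2) : 0 < \det M -> \det M != 0.
Proof. exact: pneq. Qed.

Lemma mob_pos (M : 'M[R]_2) z : 0 < \det M -> 0 < z.2 -> 0 < (mob M z).2.
Proof.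
move=> dM y0; rewrite mob_alt /= divr_gt0 ?mulr_gt0 //.
exact: Dn_gt0 (pneq dM) (pneq y0).
Qed.

Lemma axis_ax (M : 'M[R]_2) y t : 0 < y -> 0 < \det M -> mob M (0,y) = (0,t) ->
  ax (M 0 0) (M 0 1) (M 1 0) (M 1 1) y t.
Proof.
move=> y0 dM; have D := @Dn_gt0 M (0,y) (pneq dM) (pneq y0).
rewrite mob_alt => -[h1 h2]; split.
  have E := mulz (invr_neq0 (pneq D)) h1.
  by rewrite -E /=; ring.
have -> : (M 0 0 * M 1 1 - M 0 1 * M 1 0) * y - t * (M 1 1 ^+ 2 + M 1 0 ^+ 2 * y ^+ 2)
   = (\det M * y / Dn M (0, y) - t) * Dn M (0,y).
  rewrite det2 /Dn /=; field; move: D; rewrite /Dn /= mulr0 add0r; exact: pneq.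
by rewrite -h2 subrr mul0r.
Qed.

Lemma mob1 z : mob 1%:M z = z.
Proof.
case: z => x y; rewrite /mob !mxE /=.
by congr pair; field.
Qed.

Lemma mobN (M : 'M[R]_2) z : mob (- M) z = mob M z.
Proof. by rewrite /mob !mxE; congr pair; congr (_ / _); ring. Qed.

Lemma mob_conj (k A : 'M[R]_2) q : \det k != 0 -> \det A != 0 -> q.2 != 0 ->
  mob (k *m A *m invmx k) (mob k q) = mob k (mob A q).
Proof.
move=> dk dA y0.
have uk : k \in unitmx by rewrite unitmxE unitfE.
have dki : \det (invmx k) != 0 by rewrite det_inv invr_neq0.
have dkA : \det (k *m A) != 0 by rewrite det_mulmx mulf_neq0.
have dX : \det (k *m A *m invmx k) != 0 by rewrite det_mulmx mulf_neq0.
rewrite -mobM // -mulmxA mulVmx // mulmx1 mobM //.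
Qed.

Lemma ord2 (i : 'I_2) : i = 0 \/ i = 1.
Proof. by case: i => [[|[|n]]] Hi; [left|right|]; try apply/val_inj. Qed.

Lemma mx2_eq (X Y : 'M[R]_2) : X 0 0 = Y 0 0 -> X 0 1 = Y 0 1 ->
  X 1 0 = Y 1 0 -> X 1 1 = Y 1 1 -> X = Y.
Proof.
move=> h1 h2 h3 h4; apply/matrixP => i j.
by case: (ord2 i) => ->; case: (ord2 j) => ->.
Qed.

Lemma conj_mul (k A B : 'M[R]_2) : k \in unitmx ->
  (k *m A *m invmx k) *m (k *m B *m invmx k) = k *m (A *m B) *m invmx k.
Proof.
move=> uk; by rewrite !mulmxA -(mulmxA _ (invmx k) k) mulVmx // mulmx1.
Qed.

Lemma conj_inj (k X Y : 'M[R]_2) : k \in unitmx ->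
  k *m X *m invmx k = k *m Y *m invmx k -> X = Y.
Proof.
move=> uk h.
have := congr1 (fun W => invmx k *m W *m k) h => /=.
by rewrite !mulmxA mulVmx // !mul1mx -!mulmxA mulVmx // !mulmx1.
Qed.

Definition mk a b c d : 'M[R]_2 :=
  \matrix_(i < 2, j < 2) (if i == 0 then (if j == 0 then a else b) else (if j == 0 then c else d)).

Lemma mkE a b c d : [/\ mk a b c d 0 0 = a, mk a b c d 0 1 = b,
  mk a b c d 1 0 = c & mk a b c d 1 1 = d].
Proof. by split; rewrite mxE. Qed.

Lemma geo_k (G : R * R -> Prop) : is_geodesic G ->
  exists k : 'M[R]_2, 0 < \det k /\ forall z, G z -> (mob k z).1 = 0.
Proof.
case=> [[x0 hG]|[c [r [r0 hG]]]].
  exists (mk 1 (- x0) 0 1); have [e1 e2 e3 e4] := mkE 1 (- x0) 0 1.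
  split; first by rewrite det2 e1 e2 e3 e4 mulr0 subr0 mulr1 ltr01.
  move=> z /hG [_ hz]; rewrite /mob e1 e2 e3 e4 /= hz.
  have -> : (1 * x0 - x0) * (0 * x0 + 1) + 1 * 0 * z.2 ^+ 2 = 0 by ring.
  by rewrite mul0r.
exists (mk 1 (r - c) (-1) (c + r)); have [e1 e2 e3 e4] := mkE 1 (r - c) (-1) (c + r).
split.
  rewrite det2 e1 e2 e3 e4; have -> : 1 * (c + r) - (r - c) * -1 = r + r by ring.
  exact: addr_gt0.
move=> z /hG [_ hz]; rewrite /mob e1 e2 e3 e4 /=.
have -> : (1 * z.1 + (r - c)) * (-1 * z.1 + (c + r)) + 1 * -1 * z.2 ^+ 2 =
   r ^+ 2 - ((z.1 - c) ^+ 2 + z.2 ^+ 2) by ring.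
by rewrite hz subrr mul0r.
Qed.

Lemma mobM1 A B z : \det A = 1 -> \det B = 1 -> 0 < z.2 ->
  mob (A *m B) z = mob A (mob B z).
Proof. by move=> hA hB hz; rewrite mobM ?hA ?hB ?oner_neq0 ?pneq. Qed.

Lemma pos1 A z : \det A = 1 -> 0 < z.2 -> 0 < (mob A z).2.
Proof. by move=> hA hz; rewrite mob_pos ?hA. Qed.

Lemma det1M A B : \det A = 1 -> \det B = 1 -> \det (A *m B) = 1.
Proof. by move=> hA hB; rewrite det_mulmx hA hB mulr1. Qed.

Lemma mobVK A z : \det A = 1 -> 0 < z.2 -> mob (invmx A) (mob A z) = z.
Proof.
move=> hA hz; have uA : A \in unitmx by rewrite unitmxE hA unitr1.
have hV : \det (invmx A) = 1 by rewrite det_inv hA invr1.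
by rewrite -mobM1 // mulVmx // mob1.
Qed.

Lemma mobKV A z : \det A = 1 -> 0 < z.2 -> mob A (mob (invmx A) z) = z.
Proof.
move=> hA hz; have uA : A \in unitmx by rewrite unitmxE hA unitr1.
have hV : \det (invmx A) = 1 by rewrite det_inv hA invr1.
by rewrite -mobM1 // mulmxV // mob1.
Qed.

Lemma on_axis (z : R * R) : z.1 = 0 -> z = (0, z.2).
Proof. by case: z => x y /= ->. Qed.
End S.

Unset Implicit Arguments.

Theorem mainTheorem3 (R : realType) (xi eta : 'M[R]_2) (p : R * R) :
  SL2 xi -> SL2 eta ->
  elliptic (xi *m eta *m invmx xi *m invmx eta) ->
  H2 p -> mob (xi *m eta *m invmx xi *m invmx eta) p = p ->
  ~ (exists G : R * R -> Prop,
       [/\ is_geodesic G,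
           G (mob eta (mob (invmx xi) (mob (invmx eta) p))),
           G (mob (invmx xi) (mob (invmx eta) p)),
           G (mob (invmx eta) p)
         & G p]).
Proof.
rewrite /SL2 /H2 => sx se ell Hp fp [G [geo G1 G2 G3 G4]].
set A := invmx xi in fp G1 G2 G3 *; set B := invmx eta in fp G1 G2 G3 *.
have ux : xi \in unitmx by rewrite unitmxE sx unitr1.
have ue : eta \in unitmx by rewrite unitmxE se unitr1.
have dA : \det A = 1 by rewrite /A det_inv sx invr1.
have dB : \det B = 1 by rewrite /B det_inv se invr1.
have C1 : mob A (mob B p) = mob B (mob A p).
  have pB := pos1 dB Hp; have pAB := pos1 dA pB.
  have pe := pos1 se pAB.
  rewrite -[in LHS](mobVK se pAB) -(mobVK sx pe) -[in RHS]fp.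
  by rewrite !mobM1 ?det1M.
have C2 : mob eta (mob A (mob B p)) = mob A p.
  by rewrite C1 mobKV // pos1.
rewrite C2 in G1.
have pB := pos1 dB Hp; have pA := pos1 dA Hp; have pAB := pos1 dA pB.
have [k [dk Hk]] := geo_k geo.
have uk : k \in unitmx by rewrite unitmxE unitfE pneq.
set M := k *m A *m invmx k; set N := k *m B *m invmx k.
have dM : \det M = 1.
  by rewrite /M !det_mulmx dA det_inv mulr1 mulfV // pneq.
have dN : \det N = 1.
  by rewrite /N !det_mulmx dB det_inv mulr1 mulfV // pneq.
have cM z : 0 < z.2 -> mob M (mob k z) = mob k (mob A z).
  by move=> hz; rewrite mob_conj ?dA ?oner_neq0 ?pneq.
have cN z : 0 < z.2 -> mob N (mob k z) = mob k (mob B z).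
  by move=> hz; rewrite mob_conj ?dB ?oner_neq0 ?pneq.
have P4 := on_axis (Hk _ G4); have P3 := on_axis (Hk _ G3).
have P2 := on_axis (Hk _ G2); have P1 := on_axis (Hk _ G1).
have y0 := mob_pos dk Hp; have t30 := mob_pos dk pB.
have t20 := mob_pos dk pAB; have t10 := mob_pos dk pA.
have p1 : 0 < \det M by rewrite dM ltr01.
have p2 : 0 < \det N by rewrite dN ltr01.
have A3 : ax (N 0 0) (N 0 1) (N 1 0) (N 1 1) (mob k p).2 (mob k (mob B p)).2.
  by apply: axis_ax => //; rewrite -P4 cN //; exact: P3.
have A1 : ax (M 0 0) (M 0 1) (M 1 0) (M 1 1) (mob k p).2 (mob k (mob A p)).2.
  by apply: axis_ax => //; rewrite -P4 cM //; exact: P1.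
have A2 : ax (M 0 0) (M 0 1) (M 1 0) (M 1 1) (mob k (mob B p)).2 (mob k (mob A (mob B p))).2.
  by apply: axis_ax => //; rewrite -P3 cM //; exact: P2.
have A4 : ax (N 0 0) (N 0 1) (N 1 0) (N 1 1) (mob k (mob A p)).2 (mob k (mob A (mob B p))).2.
  by apply: axis_ax => //; rewrite -P1 cN // -C1; exact: P2.
have MN : M *m N = N *m M \/ M *m N = - (N *m M).
  have p1' : 0 < M 0 0 * M 1 1 - M 0 1 * M 1 0 by rewrite -det2.
  have p2' : 0 < N 0 0 * N 1 1 - N 0 1 * N 1 0 by rewrite -det2.
  case: (core8 y0 t10 t20 t30 p1' p2' A3 A1 A2 A4) => [[h1 h2 h3 h4]|[h1 h2 h3 h4]].
    by left; apply: mx2_eq; rewrite !(mul2 M N) !(mul2 N M).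
  by right; apply: mx2_eq; rewrite [RHS]mxE !(mul2 M N) !(mul2 N M).
have AB : A *m B = B *m A \/ A *m B = - (B *m A).
  case: MN => h; rewrite /M /N !conj_mul // in h.
    by left; exact: conj_inj uk h.
  by right; apply: (conj_inj uk); rewrite h -mulNmx -mulmxN.
have Hg : xi *m eta *m A *m B = 1%:M \/ xi *m eta *m A *m B = - 1%:M.
  have E : xi *m eta *m (B *m A) = 1%:M.
    by rewrite mulmxA -(mulmxA xi) mulmxV // mulmx1 mulmxV.
  case: AB => h; [left|right]; rewrite -mulmxA h //.
  by rewrite mulmxN E.
have fixall q : mob (xi *m eta *m A *m B) q = q.
  by case: Hg => ->; rewrite ?mobN mob1.
case: ell => p0 [_ _ U].
have e1 := U p Hp (fixall p).
have e2 := U (p.1, p.2 + 1) (addr_gt0 Hp ltr01) (fixall _).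
have := congr1 snd (etrans e2 (esym e1)) => /= /eqP.
by rewrite -subr_eq0 addrC addKr oner_eq0.
Qed.
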